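(* There is no function $f : \mathbb{N} \to (0,+\infty)$ such that $\mathsf{LowerCalDist}(x,p) \ge f(T)\cdot \mathsf{CalDist}(x,p)$ holds for all positive integers $T$, all $x \in \{0,1\}^T$ and all $p \in [0,1]^T$.
   Context: For $x \in \{0,1\}^T$, let $\mathcal{C}(x) = \{q \in [0,1]^T : \sum_{t=1}^T (x_t - q_t)\mathbf{1}[q_t = \alpha] = 0 \text{ for all } \alpha \in [0,1]\}$ and $\mathsf{CalDist}(x,p) = \min_{q \in \mathcal{C}(x)} \|p-q\|_1$. Let $\underline{\mathcal{C}}(x)$ be the set of $T$-tuples $\mathcal{D} = (\mathcal{D}_1,\ldots,\mathcal{D}_T)$ of probability distributions, each with finite support contained in $[0,1]$, such that $\sum_{t=1}^T (x_t - \alpha)\mathcal{D}_t(\alpha) = 0$ for every $\alpha \in [0,1]$. Then $\mathsf{LowerCalDist}(x,p) = \inf_{\mathcal{D} \in \underline{\mathcal{C}}(x)} \sum_{t=1}^T \mathbb{E}_{q_t \sim \mathcal{D}_t}|p_t - q_t|$. *)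

(* Defs.v *)
From mathcomp Require Import all_boot all_order all_algebra.
From mathcomp Require Import classical_sets boolp reals.
Set Implicit Arguments. Unset Strict Implicit. Unset Printing Implicit Defensive.
Import Order.TTheory GRing.Theory Num.Theory.
Local Open Scope ring_scope.
Local Open Scope classical_set_scope.

Section CalDefs.
Variable R : realType.
Variable T : nat.

(* x in {0,1}^T is a function 'I_T -> bool, read as 0/1 via b%:R *)
Definition unit_vec (p : 'I_T -> R) : Prop := forall t, 0 <= p t <= 1.

Definition calibrated_set (x : 'I_T -> bool) : set ('I_T -> R) :=
  [set q | unit_vec q /\
     forall alpha : R, 0 <= alpha <= 1 ->
       \sum_(t < T) ((x t)%:R - q t) * (q t == alpha)%:R = 0].

Definition l1dist (p q : 'I_T -> R) : R := \sum_(t < T) `|p t - q t|.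

(* CalDist(x,p) = min_{q in C(x)} ||p - q||_1 ; the minimum is attained,
   so it coincides with the infimum used here. *)
Definition CalDist (x : 'I_T -> bool) (p : 'I_T -> R) : R :=
  inf [set d | exists2 q, calibrated_set x q & d = l1dist p q].

(* A T-tuple of finitely supported probability distributions on [0,1] is
   encoded by a finite duplicate-free list S of reals containing the union of
   the supports, and the mass functions D t : R -> R. *)
Definition lower_calibrated (x : 'I_T -> bool) (S : seq R) (D : 'I_T -> R -> R)
  : Prop :=
  [/\ uniq S,
      (forall t a, D t a <> 0 -> a \in S),
      (forall t a, 0 <= D t a),
      (forall t a, D t a <> 0 -> 0 <= a <= 1) &
      (forall t, \sum_(a <- S) D t a = 1)] /\
      (forall alpha : R, 0 <= alpha <= 1 ->
         \sum_(t < T) ((x t)%:R - alpha) * D t alpha = 0).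

Definition lower_cost (p : 'I_T -> R) (S : seq R) (D : 'I_T -> R -> R) : R :=
  \sum_(t < T) \sum_(a <- S) D t a * `|p t - a|.

Definition LowerCalDist (x : 'I_T -> bool) (p : 'I_T -> R) : R :=
  inf [set d | exists S D, lower_calibrated x S D /\ d = lower_cost p S D].

End CalDefs.

(* Main.v *)
Require Import Defs.
From mathcomp Require Import all_boot all_order all_algebra.
From mathcomp Require Import classical_sets boolp reals.
From mathcomp Require Import ring lra.
Import Order.TTheory GRing.Theory Num.Theory.
Local Open Scope ring_scope.

Lemma expand4 (R : realType) (F : 'I_4 -> R) :
  \sum_(t < 4) F t = F (inord 0) + F (inord 1) + F (inord 2) + F (inord 3).
Proof.
rewrite !big_ord_recr big_ord0 /= add0r.
by congr (F _ + F _ + F _ + F _); apply: val_inj; rewrite /= inordK.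
Qed.

Definition xx : 'I_4 -> bool := fun t => odd t.

Lemma key (R : realType) (q : 'I_4 -> R) :
  (forall t, 1/3 < q t < 2/3) -> calibrated_set xx q ->
  forall t, q t = 1/2.
Proof.
move=> hq [_ hc] t.
have h0 := hq (inord 0); have h1 := hq (inord 1); have h2 := hq (inord 2);
have h3 := hq (inord 3).
rewrite -(inord_val t).
case: t => [[|[|[|[|//]]]] ht] /=;
set a := q _; (have : 0 <= a <= 1 by rewrite /a; lra);
move=> /hc; rewrite expand4 /xx !inordK //= /a;
rewrite ?eqxx;
repeat case: eqP => [?|_];
  rewrite /= ?mulr1 ?mulr0; lra.
Qed.

Definition vv {R : realType} (m : R) : R := (1+m)/(2+m).
Definition uu {R : realType} (m : R) : R := (1-m)/(2-m).
Lemma bnds (R : realType) (m : R) : 0 < m -> m <= 1/10 ->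
  [/\ (2+m) * vv m = 1 + m, (2-m) * uu m = 1 - m,
      1/2 < vv m <= 1/2 + m/4, 1/2 - m/2 <= uu m < 1/2 & m/3 <= vv m - uu m <= m].
Proof.
move=> m0 m1.
have hv : (2+m) * vv m = 1 + m.
  have h2 : 2 + m != 0 by apply: lt0r_neq0; lra.
  by rewrite /vv; field.
have hu : (2-m) * uu m = 1 - m.
  have h2 : 2 - m != 0 by apply: lt0r_neq0; lra.
  by rewrite /uu; field.
have vb : 1/2 < vv m <= 1/2 + m/4 by nra.
have ub : 1/2 - m/2 <= uu m < 1/2 by nra.
split => //; nra.
Qed.

Definition pp {R : realType} (m : R) : 'I_4 -> R :=
  fun t => if (t < 2)%N then vv m else uu m.
Definition DD {R : realType} (m : R) : 'I_4 -> R -> R := fun t a =>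
  if (t < 2)%N then (a == vv m)%:R else if (t < 3)%N then (a == uu m)%:R
  else m * (a == vv m)%:R + (1-m) * (a == uu m)%:R.

Lemma absfacts (R : realType) (x : R) : 0 <= `|x| /\ x <= `|x| /\ - x <= `|x|.
Proof. by rewrite normr_ge0 ler_norm -normrN ler_norm. Qed.

Lemma caldist_lb (R : realType) (m : R) : 0 < m -> m <= 1/10 ->
  m / 8 <= CalDist xx (pp m).
Proof.
move=> m0 m1; have [hv hu vb ub vub] := @bnds _ _ m0 m1.
apply: lb_le_inf.
  exists (l1dist (pp m) (fun=> 1/2)); exists (fun=> 1/2) => //.
  split; first by move=> t; lra.
  move=> a _; rewrite expand4 /xx !inordK //=; lra.
move=> d [q hq ->]; rewrite /l1dist expand4 /pp !inordK //=.
have [hin|hout] := pselect (forall t, 1/3 < q t < 2/3).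
  rewrite !(@key _ _ hin hq); have [_ [a1 a2]] := @absfacts _ (vv m - 1/2);
  have [_ [b1 b2]] := @absfacts _ (uu m - 1/2); lra.
move/existsNP: hout => [t ht]; move/negP: ht; rewrite negb_and -!leNgt => ht.
have [a0 [a1 a2]] := @absfacts _ (vv m - q (inord 0)).
have [b0 [b1 b2]] := @absfacts _ (vv m - q (inord 1)).
have [c0 [c1 c2]] := @absfacts _ (uu m - q (inord 2)).
have [d0 [d1 d2]] := @absfacts _ (uu m - q (inord 3)).
move: ht; rewrite -(inord_val t).
case: t => [[|[|[|[|//]]]] ht] /= /orP [] h; lra.
Qed.

Lemma lower_ok (R : realType) (m : R) : 0 < m -> m <= 1/10 ->
  lower_calibrated xx [:: vv m; uu m] (DD m).
Proof.
move=> m0 m1; have [hv hu vb ub vub] := @bnds _ _ m0 m1.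
have nvu : (uu m == vv m) = false by apply/eqP => e; lra.
have nuv : (vv m == uu m) = false by apply/eqP => e; lra.
have hS : forall t a, DD m t a <> 0 -> a \in [:: vv m; uu m].
  move=> t a; rewrite !inE /DD; case: (a =P vv m) => [_|_] //=;
  case: (a =P uu m) => [_|_] //= h; exfalso; apply: h.
  rewrite /= ?mulr0n ?mulr0 ?addr0; by case: ifP => _ //; case: ifP.
split; [split|].
- by rewrite /= inE nuv.
- exact: hS.
- move=> t a; rewrite /DD; case: ifP => _; [|case: ifP => _]; rewrite ?ler0n //.
  apply: addr_ge0; apply: mulr_ge0; rewrite ?ler0n //; lra.
- move=> t a /hS; rewrite !inE => /orP [] /eqP ->; lra.
- move=> t; rewrite big_cons big_cons big_nil addr0 /DD !eqxx nvu nuv /=.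
  case: ifP => _; [|case: ifP => _]; rewrite /= ?mulr0n ?mulr1n; lra.
- move=> a _; rewrite expand4 /xx /DD !inordK //=.
  case: (a =P vv m) => [->|_]; case: (a =P uu m) => [e|_];
  rewrite /= ?eqxx ?nuv ?nvu /= ?mulr0n ?mulr1n; nra.
Qed.

Lemma lower_cost_val (R : realType) (m : R) : 0 < m -> m <= 1/10 ->
  lower_cost (pp m) [:: vv m; uu m] (DD m) = m * (vv m - uu m).
Proof.
move=> m0 m1; have [hv hu vb ub vub] := @bnds _ _ m0 m1.
have nvu : (uu m == vv m) = false by apply/eqP => e; lra.
have nuv : (vv m == uu m) = false by apply/eqP => e; lra.
have e1 : `|uu m - vv m| = vv m - uu m by rewrite distrC ger0_norm //; lra.
have e2 : `|vv m - uu m| = vv m - uu m by rewrite ger0_norm //; lra.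
rewrite /lower_cost expand4 !big_cons !big_nil /DD /pp !inordK //=.
rewrite eqxx nvu nuv !subrr normr0 e1 e2 /= ?mulr0n ?mulr1n; lra.
Qed.

Lemma lowdist_ub (R : realType) (m : R) : 0 < m -> m <= 1/10 ->
  LowerCalDist xx (pp m) <= m * (vv m - uu m).
Proof.
move=> m0 m1; apply: (ge_inf).
  exists 0 => y [S [D [[[_ _ hD _ _] _] ->]]].
  apply: sumr_ge0 => t _; apply: sumr_ge0 => a _.
  by apply: mulr_ge0.
exists [:: vv m; uu m], (DD m); split; first exact: lower_ok.
by rewrite lower_cost_val.
Qed.

Theorem proposition2 (R : realType) :
  ~ (exists f : nat -> R,
       (forall n, 0 < f n) /\
       (forall (T : nat), (0 < T)%N ->
          forall (x : 'I_T -> bool) (p : 'I_T -> R), unit_vec p ->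
            f T * CalDist x p <= LowerCalDist x p)).
Proof.
move=> [f [fpos H]].
have c0 := fpos 4%N.
set c := f 4%N in c0.
set m : R := Num.min (c / 16) (1/10).
have m0 : 0 < m by rewrite /m lt_min; apply/andP; split; lra.
have m1 : m <= 1/10 by rewrite /m ge_min lexx orbT.
have m2 : m <= c/16 by rewrite /m ge_min lexx.
have [hv hu vb ub vub] := @bnds _ _ m0 m1.
have up : unit_vec (pp m) by move=> t; rewrite /pp; case: ifP => _; lra.
have h := H 4%N isT xx (pp m) up.
have l1 := @caldist_lb _ _ m0 m1.
have l2 := @lowdist_ub _ _ m0 m1.
have l3 : c * (m / 8) <= c * CalDist xx (pp m) by rewrite ler_wpM2l //; lra.
have l4 : m * (vv m - uu m) <= m * m by rewrite ler_wpM2l //; lra.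
rewrite -/c in h.
nra.
Qed.
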